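(* Let $g$ be a growth control function and $(p_j)_{j\in\mathbb{N}_0}$ a strictly increasing sequence of integers with $p_0=0$, and let $\boldsymbol{M}$ be the sequence with $M_0=1$ whose quotients are $m_p=g(p_j)$ for $p_j\le p<p_{j+1}$, $j\in\mathbb{N}_0$ (so $M_p=m_0\cdots m_{p-1}$). If $\sup_{j\in\mathbb{N}}p_{j+1}/p_j=+\infty$, then $\gamma(\boldsymbol{M})=0$.
   Context: A growth control function is a strictly increasing function $g\colon[0,\infty)\to[1,\infty)$ with $g(0)=1$ and $\lim_{t\to\infty}g(t)=\infty$. A sequence $(c_p)$ is almost increasing if there is $a>0$ with $c_p\le ac_q$ for all $q\ge p$. For a sequence with quotients $m_p$, $\gamma(\boldsymbol{M})=\sup\{\mu>0:(m_p/(p+1)^\mu)_p\text{ is almost increasing}\}\in[0,\infty]$, with the value $0$ if the set is empty. *)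

(* Defs.v *)
From Stdlib Require Import Reals Lra ClassicalEpsilon.
From Coquelicot Require Import Coquelicot.
Open Scope R_scope.

Definition growth_control (g : R -> R) : Prop :=
  (forall t, 0 <= t -> 1 <= g t) /\
  (forall s t, 0 <= s -> s < t -> g s < g t) /\
  g 0 = 1 /\
  is_lim g p_infty p_infty.

Definition almost_increasing (c : nat -> R) : Prop :=
  exists a, 0 < a /\ forall p q : nat, (p <= q)%nat -> c p <= a * c q.

Definition gamma_set (m : nat -> R) (mu : R) : Prop :=
  0 < mu /\ almost_increasing (fun p => m p / Rpower (INR p + 1) mu).

(* gamma(M) in [0,+oo] (as an Rbar); value 0 if the set is empty *)
Definition gamma_index (m : nat -> R) : Rbar :=
  if excluded_middle_informative (exists mu, gamma_set m mu)
  then Lub_Rbar (gamma_set m)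
  else Finite 0.

Definition sup_ratio (p : nat -> nat) : Rbar :=
  Lub_Rbar (fun x => exists j : nat, (1 <= j)%nat /\ x = INR (p (S j)) / INR (p j)).

(* Main.v *)
Require Import Defs.
From Stdlib Require Import Reals Lra Lia ClassicalEpsilon Classical_Prop.
From Coquelicot Require Import Coquelicot.
Open Scope R_scope.

Lemma Rpow_pos (x y : R) : 0 < Rpower x y.
Proof. unfold Rpower. apply exp_pos. Qed.

Lemma p_ge (p : nat -> nat) : (forall j : nat, (p j < p (S j))%nat) -> forall j, (j <= p j)%nat.
Proof. intros H j. induction j. lia. specialize (H j). lia. Qed.

Theorem proposition4p9 (g : R -> R) (p : nat -> nat) (m : nat -> R) :
  growth_control g ->
  (forall j : nat, (p j < p (S j))%nat) ->
  p 0%nat = 0%nat ->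
  (forall (j q : nat), (p j <= q < p (S j))%nat -> m q = g (INR (p j))) ->
  sup_ratio p = p_infty ->
  gamma_index m = Finite 0.
Proof.
  intros [Hg1 _] Hinc H0 Hm Hsup.
  unfold gamma_index.
  destruct (ClassicalEpsilon.excluded_middle_informative _) as [[mu [Hmu [a [Ha Hai]]]] | _]; [|reflexivity].
  exfalso.
  set (K := Rpower (a+1) (/mu)).
  assert (HK : Rpower K mu = a + 1).
  { unfold K. rewrite Rpower_mult. rewrite Rinv_l by lra. apply Rpower_1. lra. }
  assert (HKp : 0 < K) by apply Rpow_pos.
  assert (Hex : exists j, (1 <= j)%nat /\ 2 * K < INR (p (S j)) / INR (p j)).
  { apply Classical_Prop.NNPP. intro Hn.
    pose proof (Lub_Rbar_correct (fun x => exists j : nat, (1 <= j)%nat /\ x = INR (p (S j)) / INR (p j))) as [_ Hl].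
    assert (Hub : is_ub_Rbar (fun x => exists j : nat, (1 <= j)%nat /\ x = INR (p (S j)) / INR (p j)) (2*K)).
    { intros x [j [Hj ->]]. simpl. apply Rnot_lt_le. intro Hc. apply Hn. exists j. auto. }
    specialize (Hl _ Hub). unfold sup_ratio in Hsup. rewrite Hsup in Hl. simpl in Hl. exact Hl. }
  destruct Hex as [j [Hj Hr]].
  pose proof (p_ge p Hinc j) as Hpj.
  pose proof (Hinc j) as Hij.
  assert (HPj : 1 <= INR (p j)) by (apply (le_INR 1); lia).
  assert (Hbig : K * (INR (p j) + 1) < INR (p (S j))).
  { assert (E : INR (p (S j)) = (INR (p (S j)) / INR (p j)) * INR (p j)) by (field; lra).
    rewrite E. nra. }
  set (P := p j). set (Q := (p (S j) - 1)%nat).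
  assert (HQ : INR Q + 1 = INR (p (S j))).
  { unfold Q. rewrite minus_INR by lia. simpl. lra. }
  assert (HmP : m P = g (INR (p j))) by (apply Hm; unfold P; lia).
  assert (HmQ : m Q = g (INR (p j))) by (apply Hm; unfold Q; lia).
  specialize (Hai P Q ltac:(unfold P, Q; lia)). simpl in Hai.
  rewrite HmP, HmQ, HQ in Hai.
  set (G := g (INR (p j))) in Hai.
  assert (HG : 1 <= G) by (apply Hg1; apply pos_INR).
  set (A := Rpower (INR P + 1) mu) in Hai.
  set (B := Rpower (INR (p (S j))) mu) in Hai.
  assert (HA : 0 < A) by apply Rpow_pos.
  assert (HB : 0 < B) by apply Rpow_pos.
  assert (HBA : B <= a * A).
  { unfold Rdiv in Hai.
    apply Rmult_le_compat_r with (r := A * B / G) in Hai.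
    2:{ apply Rlt_le. unfold Rdiv. apply Rmult_lt_0_compat; [nra| apply Rinv_0_lt_compat; lra]. }
    replace (G * / A * (A * B / G)) with B in Hai by (field; lra).
    replace (a * (G * / B) * (A * B / G)) with (a * A) in Hai by (field; lra).
    exact Hai. }
  assert (HB2 : (a+1) * A < B).
  { rewrite <- HK. unfold A, B. rewrite Rpower_mult_distr by (auto; unfold P; lra).
    apply Rlt_Rpower_l; auto. split. apply Rmult_lt_0_compat; unfold P; lra. exact Hbig. }
  nra.
Qed.
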